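(* Let $\mu$ be a continuous capacity on a measurable space $(\Omega,\mathcal{F})$ and let $\mathcal{F}_0$ be a sub-$\sigma$-algebra of $\mathcal{F}$ with $\mu(A)\in\{0,1\}$ for all $A\in\mathcal{F}_0$. Then: (i) for every $\mathcal{F}_0$-measurable real-valued random variable $\xi$, $$\mu\Big(\Big\{\omega:\ \xi(\omega)\ge \int_{\Omega}\xi\, d\mu\Big\}\Big)=1\quad\text{and}\quad \mu\Big(\Big\{\omega:\ \xi(\omega)\le\int_{\Omega}\xi\, d\bar{\mu}\Big\}\Big)=1;$$ (ii) if moreover $\mu(A\cap B)=1$ for all $A,B\in\mathcal{F}_0$ with $\mu(A)=\mu(B)=1$, then for every $\mathcal{F}_0$-measurable real-valued random variable $\xi$, $$\mu\Big(\Big\{\omega:\ \int_{\Omega}\xi\, d\mu \le\xi(\omega)\le\int_{\Omega}\xi\, d\bar{\mu}\Big\}\Big)=1.$$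
   Context: A capacity on $\mathcal{F}$ is a set function $\mu:\mathcal{F}\to[0,1]$ with $\mu(\emptyset)=0$, $\mu(\Omega)=1$ and $\mu(A)\le\mu(B)$ whenever $A\subseteq B$; it is continuous if $\mu(A_n)\to\mu(A)$ both whenever $A_n\uparrow A$ and whenever $A_n\downarrow A$. The conjugate capacity is $\bar{\mu}(A)=1-\mu(A^c)$. The Choquet integral of a real-valued $\mathcal{F}$-measurable $\xi$ with respect to a capacity $\mu$ is $\int_{\Omega}\xi\, d\mu=\int_{0}^{\infty}\mu(\{\xi\ge t\})\,dt+\int_{-\infty}^0[\mu(\{\xi\ge t\})-1]\,dt$. *)

(* Defs.v *)
From HB Require Import structures.
From mathcomp Require Import all_boot all_order all_algebra.
From mathcomp Require Import all_classical all_reals all_analysis.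
Set Implicit Arguments. Unset Strict Implicit. Unset Printing Implicit Defensive.
Import Order.TTheory GRing.Theory Num.Theory.
Import numFieldNormedType.Exports.
Local Open Scope classical_set_scope.
Local Open Scope ring_scope.

Section Capacity.
Context {d : measure_display} {T : measurableType d} {R : realType}.

(** A capacity on the sigma-algebra [measurable] of T (values on
    non-measurable sets are irrelevant). *)
Definition capacity (mu : set T -> R) : Prop :=
  [/\ mu set0 = 0, mu setT = 1,
      (forall A, measurable A -> 0 <= mu A <= 1) &
      (forall A B, measurable A -> measurable B -> A `<=` B -> mu A <= mu B)].

Definition continuous_capacity (mu : set T -> R) : Prop :=
  capacity mu /\
  (forall (A : (set T)^nat), (forall n, measurable (A n)) ->
     nondecreasing_seq A -> (fun n => mu (A n)) @ \oo --> mu (\bigcup_n A n)) /\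
  (forall (A : (set T)^nat), (forall n, measurable (A n)) ->
     nonincreasing_seq A -> (fun n => mu (A n)) @ \oo --> mu (\bigcap_n A n)).

Definition conj_cap (mu : set T -> R) : set T -> R := fun A => 1 - mu (~` A).

Definition choquet (mu : set T -> R) (xi : T -> R) : \bar R :=
  ((\int[lebesgue_measure]_(t in `[0%R, +oo[) (mu [set w | t <= xi w])%:E)
   + (\int[lebesgue_measure]_(t in `]-oo, 0%R[) (mu [set w | t <= xi w] - 1)%:E))%E.

End Capacity.

(* Main.v *)
Require Import Defs.
From HB Require Import structures.
From mathcomp Require Import all_boot all_order all_algebra.
From mathcomp Require Import all_classical all_reals all_analysis.
Set Implicit Arguments. Unset Strict Implicit. Unset Printing Implicit Defensive.
Import Order.TTheory GRing.Theory Num.Theory.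
Import numFieldNormedType.Exports.
Local Open Scope classical_set_scope.
Local Open Scope ring_scope.

Lemma step_int (R : realType) (m : R -> R) (c : R) :
  (forall t, m t = if t <= c then 1 else 0) ->
  ((\int[lebesgue_measure]_(t in `[0%R, +oo[) (m t)%:E)
   + (\int[lebesgue_measure]_(t in `]-oo, 0%R[) (m t - 1)%:E))%E = c%:E.
Proof.
move=> hm.
have -> : (\int[lebesgue_measure]_(t in `[0%R, +oo[) (m t)%:E)%E =
   (\int[lebesgue_measure]_(t in `[0%R, +oo[) (\1_(`]-oo, c]) t)%:E)%E.
  apply: eq_integral => t _; rewrite hm indicE.
  by case: ifP => h; [rewrite mem_set// /= in_itv /= h | rewrite memNset// /= in_itv /= h].
rewrite integral_indic //.
have -> : (\int[lebesgue_measure]_(t in `]-oo, 0%R[) (m t - 1)%:E)%E =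
   (\int[lebesgue_measure]_(t in `]-oo, 0%R[) - (\1_(`]c, +oo[) t)%:E)%E.
  apply: eq_integral => t _; rewrite hm indicE.
  case: ifP => h.
    by rewrite memNset /= ?in_itv /= ?andbT ?ltNge ?h // subrr oppr0.
  by rewrite mem_set /= ?in_itv /= ?andbT ?ltNge ?h // sub0r.
rewrite integralN; last first.
  rewrite [X in (_ +? - X)%E]integral0_eq; last first.
    move=> x _; rewrite (@ge0_funenegE _ _ setT) ?inE // => y _.
  by rewrite oppe0; case: (\int[_]_(_ in _) _)%E.
rewrite integral_indic //.
case: (leP 0 c) => hc.
  have -> : `]-oo, c] `&` `[0, +oo[ = [set` `[0, c]] :> set R.
    by apply/seteqP; split => x /=; rewrite !in_itv /= ?andbT; [move=> [-> ->] | move=> /andP [-> ->]].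
  have -> : `]c, +oo[ `&` `]-oo, 0[ = set0 :> set R.
    apply/seteqP; split => x //=; rewrite !in_itv /= andbT => -[h1 h2].
    by move: (lt_trans h1 h2); rewrite ltNge hc.
  rewrite measure0 oppe0 adde0; apply: eq_trans (lebesgue_measure_itv `[0, c]) _.
  rewrite /= lte_fin; case: ltgtP hc => //=; first by move=> _ _; rewrite -EFinD subr0.
  by move=> <-.
have -> : `]-oo, c] `&` `[0, +oo[ = set0 :> set R.
  apply/seteqP; split => x //=; rewrite !in_itv /= andbT => -[h1 h2].
  by move: (le_lt_trans h2 (le_lt_trans h1 hc)); rewrite ltxx.
have -> : `]c, +oo[ `&` `]-oo, 0[ = [set` `]c, 0[] :> set R.
  by apply/seteqP; split => x /=; rewrite !in_itv /= ?andbT; [move=> [-> ->] | move=> /andP [-> ->]].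
rewrite measure0 add0e; apply: eq_trans (congr1 (fun x => - x)%E (lebesgue_measure_itv `]c, 0[)) _.
rewrite /= lte_fin hc.
by rewrite -EFinN opprB subr0.
Qed.

Lemma cst_cvg_eq (R : realType) (u : nat -> R) (a b : R) :
  (forall n, u n = a) -> u @ \oo --> b -> a = b.
Proof.
move=> hu hb.
have eu : u = fun _ => a by apply: funext.
rewrite eu in hb.
exact: (@cvg_unique R (@Rhausdorff R) _ _ a b (cvg_cst a) hb).
Qed.

Lemma threshold (R : realType) (f : R -> R) :
  (forall t, f t = 0 \/ f t = 1) ->
  (forall s t, s <= t -> f t <= f s) ->
  (fun n : nat => f (- n%:R)) @ \oo --> (1 : R) ->
  (fun n : nat => f n%:R) @ \oo --> (0 : R) ->
  (forall t, (fun n : nat => f (t - n.+1%:R^-1)) @ \oo --> f t) ->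
  exists c, forall t, f t = if t <= c then 1 else 0.
Proof.
move=> h01 hmon hlo hhi hlc.
have [n0 hn0] : exists n : nat, f (- n%:R) = 1.
  apply: contrapT => hn.
  have h : forall n : nat, f (- n%:R) = 0.
    move=> n; case: (h01 (- n%:R)) => // h1; exfalso; apply: hn; by exists n.
  have := cst_cvg_eq h hlo; by move/eqP; rewrite eq_sym oner_eq0.
have [N hN] : exists n : nat, f n%:R = 0.
  apply: contrapT => hn.
  have h : forall n : nat, f n%:R = 1.
    move=> n; case: (h01 n%:R) => // h1; exfalso; apply: hn; by exists n.
  have := cst_cvg_eq h hhi; by move/eqP; rewrite oner_eq0.
pose S := [set t | f t = 1].
have hS : has_sup S.
  split; first by exists (- n0%:R).
  exists N%:R => t /= ht; rewrite leNgt; apply/negP => hlt.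
  have := hmon _ _ (ltW hlt); rewrite ht hN; by rewrite ler10.
pose c := sup S.
have below : forall t, t < c -> f t = 1.
  move=> t ht; have ht0 : 0 < c - t by rewrite subr_gt0.
  have [e Se he] := sup_adherent ht0 hS.
  rewrite opprB addrCA subrr addr0 in he.
  have := hmon _ _ (ltW he); rewrite Se.
  by case: (h01 t) => ->; rewrite ?ler10.
exists c => t; case: ifP => htc.
  case: (ltgtP t c) htc => // [htc _ | -> _]; first exact: below.
  symmetry; apply: (cst_cvg_eq _ (hlc c)) => n.
  apply: below; rewrite ltrBlDr ltrDl invr_gt0; exact: ltr0Sn.
case: (h01 t) => // h1; exfalso.
have := sup_upper_bound hS h1; by rewrite -/c htc.
Qed.

Lemma exists_nat_ge (R : realType) (x : R) : exists n : nat, - n%:R <= x /\ x < n%:R.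
Proof.
exists (Num.Def.archi_bound `|x|).
have := archi_boundP (normr_ge0 x); rewrite ltr_norml => /andP [h1 h2].
by split => //; apply: ltW.
Qed.

Lemma inv_pos (R : realType) (n : nat) : 0 < (n.+1%:R : R)^-1.
Proof. by rewrite invr_gt0 ltr0Sn. Qed.

Unset Implicit Arguments.
Set Strict Implicit.

Theorem theorem2 (d : measure_display) (T : measurableType d) (R : realType)
  (mu : set T -> R) (F0 : set (set T)) :
  continuous_capacity mu ->
  sigma_algebra setT F0 ->
  F0 `<=` measurable ->
  (forall A, F0 A -> mu A = 0 \/ mu A = 1) ->
  (forall xi : T -> R,
     (forall B : set R, measurable B -> F0 (xi @^-1` B)) ->
     mu [set w | (choquet mu xi <= (xi w)%:E)%E] = 1 /\
     mu [set w | ((xi w)%:E <= choquet (conj_cap mu) xi)%E] = 1) /\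
  ((forall A B, F0 A -> F0 B -> mu A = 1 -> mu B = 1 -> mu (A `&` B) = 1) ->
   forall xi : T -> R,
     (forall B : set R, measurable B -> F0 (xi @^-1` B)) ->
     mu [set w | (choquet mu xi <= (xi w)%:E)%E /\
                 ((xi w)%:E <= choquet (conj_cap mu) xi)%E] = 1).
Proof.
move=> [[mu0 muT mu01 mumon] [mup mudown]] _ F0m hF0.
have key : forall xi : T -> R,
     (forall B : set R, measurable B -> F0 (xi @^-1` B)) ->
     exists c1 c2, [/\ choquet mu xi = c1%:E, choquet (conj_cap mu) xi = c2%:E,
        F0 [set w | c1 <= xi w], F0 [set w | xi w <= c2] &
        mu [set w | c1 <= xi w] = 1 /\ mu [set w | xi w <= c2] = 1].
  move=> xi hxi.
  pose G t := [set w | t <= xi w].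
  pose H t := [set w | xi w < t].
  have FG t : F0 (G t).
    have -> : G t = xi @^-1` [set` `[t, +oo[] by apply/seteqP; split => w /=; rewrite in_itv /= andbT.
    by apply: hxi; exact: measurable_itv.
  have FH t : F0 (H t).
    have -> : H t = xi @^-1` [set` `]-oo, t[] by apply/seteqP; split => w /=; rewrite in_itv /=.
    by apply: hxi; exact: measurable_itv.
  have FL t : F0 [set w | xi w <= t].
    have -> : [set w | xi w <= t] = xi @^-1` [set` `]-oo, t]] by apply/seteqP; split => w /=; rewrite in_itv /=.
    by apply: hxi; exact: measurable_itv.
  have GT : \bigcup_n G (- n%:R) = setT.
    apply/seteqP; split => w // _; have [n [hn _]] := exists_nat_ge (xi w); by exists n.
  have G0 : \bigcap_n G n%:R = set0.
    apply/seteqP; split => w // hw; have [n [_ hn]] := exists_nat_ge (xi w).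
    by have := hw n I; rewrite /G /= leNgt hn.
  have HT : \bigcup_n H n%:R = setT.
    apply/seteqP; split => w // _; have [n [_ hn]] := exists_nat_ge (xi w); by exists n.
  have H0 : \bigcap_n H (- n%:R) = set0.
    apply/seteqP; split => w // hw; have [n [hn _]] := exists_nat_ge (xi w).
    by have := hw n I; rewrite /H /= ltNge hn.
  have Gt t : \bigcap_n G (t - n.+1%:R^-1) = G t.
    apply/seteqP; split => w /= hw.
      rewrite /G /= leNgt; apply/negP => /ltr_add_invr [k hk].
      by have := hw k I; rewrite /G /= lerBlDr leNgt hk.
    move=> n _; rewrite /G /= (le_trans _ hw) // lerBlDr lerDl; exact: ltW (inv_pos R n).
  have Ht t : \bigcup_n H (t - n.+1%:R^-1) = H t.
    apply/seteqP; split => w /=.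
      move=> [n _]; rewrite /H /= => hw; apply: (lt_le_trans hw).
      by rewrite lerBlDr lerDl; exact: ltW (inv_pos R n).
    move=> /ltr_add_invr [k hk]; exists k => //; by rewrite /H /= ltrBrDr.
  have sG s t : s <= t -> G t `<=` G s.
    by move=> hst w; rewrite /G /=; apply: le_trans.
  have sH s t : s <= t -> H s `<=` H t.
    by move=> hst w; rewrite /H /= => h; apply: lt_le_trans hst.
  have mG s t : s <= t -> mu (G t) <= mu (G s).
    by move=> hst; apply: mumon; try exact: F0m; apply: sG.
  have mH s t : s <= t -> mu (H s) <= mu (H t).
    by move=> hst; apply: mumon; try exact: F0m; apply: sH.
  have [c1 hc1] : exists c, forall t, mu (G t) = if t <= c then 1 else 0.
    apply: threshold.
    - by move=> t; exact: hF0.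
    - exact: mG.
    - have := mup (fun n => G (- n%:R)) (fun n => F0m _ (FG _)).
      rewrite GT muT; apply => n m hnm; rewrite subsetEset; apply: sG.
      by rewrite lerN2 ler_nat.
    - have := mudown (fun n => G n%:R) (fun n => F0m _ (FG _)).
      rewrite G0 mu0; apply => n m hnm; rewrite subsetEset; apply: sG.
      by rewrite ler_nat.
    - move=> t; have := mudown (fun n => G (t - n.+1%:R^-1)) (fun n => F0m _ (FG _)).
      rewrite Gt; apply => n m hnm; rewrite subsetEset; apply: sG.
      by rewrite lerB // lef_pV2 ?posrE ?ltr0Sn // ler_nat.
  have [c2 hc2] : exists c, forall t, 1 - mu (H t) = if t <= c then 1 else 0.
    apply: threshold.
    - move=> t; case: (hF0 _ (FH t)) => ->; rewrite ?subr0 ?subrr; by [right | left].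
    - by move=> s t hst; rewrite lerB // mH.
    - have := mudown (fun n => H (- n%:R)) (fun n => F0m _ (FH _)).
      rewrite H0 mu0 => h.
      have := cvgB (cvg_cst (1 : R)) (h _); rewrite subr0; apply.
      move=> n m hnm; rewrite subsetEset; apply: sH.
      by rewrite lerN2 ler_nat.
    - have := mup (fun n => H n%:R) (fun n => F0m _ (FH _)).
      rewrite HT muT => h.
      have := cvgB (cvg_cst (1 : R)) (h _); rewrite subrr; apply.
      move=> n m hnm; rewrite subsetEset; apply: sH.
      by rewrite ler_nat.
    - move=> t; have := mup (fun n => H (t - n.+1%:R^-1)) (fun n => F0m _ (FH _)).
      rewrite Ht => h; apply: (cvgB (cvg_cst (1 : R)) (h _)).
      move=> n m hnm; rewrite subsetEset; apply: sH.
      by rewrite lerB // lef_pV2 ?posrE ?ltr0Sn // ler_nat.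
  exists c1, c2; split.
  - by rewrite /choquet; apply: step_int.
  - rewrite /choquet; apply: step_int => t; rewrite /conj_cap.
    have -> : ~` [set w | t <= xi w] = H t.
      by apply/seteqP; split => w /=; rewrite /H /= ltNge => /negP.
    exact: hc2.
  - exact: FG.
  - exact: FL.
  split; first by rewrite hc1 lexx.
  have -> : [set w | xi w <= c2] = \bigcap_n H (c2 + n.+1%:R^-1).
    apply/seteqP; split => w /=.
      move=> hw n _; rewrite /H /=; apply: le_lt_trans hw _.
      by rewrite ltrDl; exact: inv_pos.
    move=> hw; rewrite leNgt; apply/negP => /ltr_add_invr [k hk].
    by have := hw k I; rewrite /H /= ltNge (ltW hk).
  have h := mudown (fun n => H (c2 + n.+1%:R^-1)) (fun n => F0m _ (FH _)).
  symmetry; apply: (cst_cvg_eq _ (h _)).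
    move=> n; have := hc2 (c2 + n.+1%:R^-1).
    rewrite leNgt ltrDl inv_pos /= => /eqP; by rewrite subr_eq0 => /eqP <-.
  move=> n m hnm; rewrite subsetEset; apply: sH.
  by rewrite lerD // lef_pV2 ?posrE ?ltr0Sn // ler_nat.
split.
  move=> xi hxi; have [c1 [c2 [e1 e2 F1 F2 [m1 m2]]]] := key xi hxi.
  rewrite e1 e2; split.
    have -> : [set w | (c1%:E <= (xi w)%:E)%E] = [set w | c1 <= xi w].
      by apply/seteqP; split => w /=; rewrite lee_fin.
    exact: m1.
  have -> : [set w | ((xi w)%:E <= c2%:E)%E] = [set w | xi w <= c2].
    by apply/seteqP; split => w /=; rewrite lee_fin.
  exact: m2.
move=> hI xi hxi; have [c1 [c2 [e1 e2 F1 F2 [m1 m2]]]] := key xi hxi.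
rewrite e1 e2.
have -> : [set w | (c1%:E <= (xi w)%:E)%E /\ ((xi w)%:E <= c2%:E)%E] =
   [set w | c1 <= xi w] `&` [set w | xi w <= c2].
  by apply/seteqP; split => w /=; rewrite !lee_fin.
exact: hI.
Qed.
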